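(* The size $z_{77}$ of the non-self-referencing LZ77 factorization satisfies (already over a ternary alphabet): substitutions: $\liminf_{n\to\infty}\mathsf{MS}_{\mathrm{sub}}(z_{77},n)\ge 2$ and $\mathsf{AS}_{\mathrm{sub}}(z_{77},n)\ge z_{77}-1$; insertions: $\liminf_{n\to\infty}\mathsf{MS}_{\mathrm{ins}}(z_{77},n)\ge 2$ and $\mathsf{AS}_{\mathrm{ins}}(z_{77},n)\ge z_{77}-1$; deletions: $\liminf_{n\to\infty}\mathsf{MS}_{\mathrm{del}}(z_{77},n)\ge 2$ and $\mathsf{AS}_{\mathrm{del}}(z_{77},n)\ge z_{77}-2$.
   Context: Strings are over an alphabet $\Sigma$ (with at least three characters); $\mathsf{ed}$ is the edit distance. $\mathsf{MS}_{\mathrm{sub}}(C,n)=\max_{T\in\Sigma^n}\{C(T')/C(T): T'\in\Sigma^n,\ \mathsf{ed}(T,T')=1\}$, with $\mathsf{MS}_{\mathrm{ins}},\mathsf{MS}_{\mathrm{del}}$ analogous for $T'$ of length $n+1$, resp. $n-1$, and $\mathsf{AS}_\ast$ analogous with $C(T')-C(T)$. A bound ''$\mathsf{AS}\ge z_{77}-c$'' means there are strings $T$ with $z_{77}(T)$ arbitrarily large and $T'$ obtained by one edit of that type with $z_{77}(T')-z_{77}(T)\ge z_{77}(T)-c$. The non-self-referencing LZ77 factorization of $T$ is $T=f_1\cdots f_z$ where, with $f_0=\varepsilon$, for each $1\le i<z$ the factor $f_i$ is the shortest prefix of $f_i\cdots f_z$ that does not occur as a substring of $f_0f_1\cdots f_{i-1}$,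 and $f_z$ is the remaining suffix; $z_{77}(T)=z$. *)

(* Defs.v *)
From mathcomp Require Import all_boot all_order all_algebra.
Set Implicit Arguments. Unset Strict Implicit. Unset Printing Implicit Defensive.
Import Order.TTheory GRing.Theory Num.Theory.

Section Defs.
Variable A : eqType.

Fixpoint ed (s t : seq A) : nat :=
  match s with
  | [::] => size t
  | x :: s' =>
      let fix ed_in (t : seq A) : nat :=
        match t with
        | [::] => size s
        | y :: t' => minn (minn (ed s' t).+1 (ed_in t').+1) (ed s' t' + (x != y))
        end
      in ed_in t
  end.

(* Length of the LZ77 factor starting at position p of w: the shortest
   l >= 1 such that w[p..p+l) does not occur as a substring of w[0..p);
   if no prefix of the remaining suffix has this property, the whole
   remaining suffix (the last factor). *)
Definition lz_next_len (w : seq A) (p : nat) : nat :=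
  let r := drop p w in
  minn (find (fun l => ~~ infix (take l.+1 r) (take p w)) (iota 0 (size r))).+1
       (size r).

Fixpoint lz_factors (fuel : nat) (w : seq A) (p : nat) : seq (seq A) :=
  match fuel with
  | 0 => [::]
  | f.+1 =>
      if p < size w then
        let l := lz_next_len w p in
        take l (drop p w) :: lz_factors f w (p + l)
      else [::]
  end.

Definition lz77 (w : seq A) : seq (seq A) := lz_factors (size w) w 0.

Definition z77 (w : seq A) : nat := size (lz77 w).
End Defs.

Local Open Scope ring_scope.

Definition ratio (a b : nat) : rat := (a%:R / b%:R)%R.

Definition MS_sub (S : finType) (n : nat) : rat :=
  \big[Order.max/0]_(T : n.-tuple S)
    \big[Order.max/0]_(T' : n.-tuple S | ed T T' == 1%N) ratio (z77 T') (z77 T).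
Definition MS_ins (S : finType) (n : nat) : rat :=
  \big[Order.max/0]_(T : n.-tuple S)
    \big[Order.max/0]_(T' : n.+1.-tuple S | ed T T' == 1%N) ratio (z77 T') (z77 T).
Definition MS_del (S : finType) (n : nat) : rat :=
  \big[Order.max/0]_(T : n.-tuple S)
    \big[Order.max/0]_(T' : n.-1.-tuple S | ed T T' == 1%N) ratio (z77 T') (z77 T).

Definition liminf_ge (u : nat -> rat) (c : rat) : Prop :=
  forall eps : rat, 0 < eps -> exists N : nat, forall n : nat, (N <= n)%N -> c - eps <= u n.

(* "AS >= z77 - c" for edits with |T'| = |T| + d (d = 0, 1 or -1 encoded by
   the length relation len) : there are T with z77 T arbitrarily large and T'
   at edit distance 1 with z77 T' - z77 T >= z77 T - c. *)
Definition AS_ge (S : eqType) (len : nat -> nat -> bool) (c : nat) : Prop :=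
  forall m : nat, exists T T' : seq S,
    [/\ (m <= z77 T)%N, len (size T) (size T'), ed T T' = 1%N
      & (z77 T + z77 T <= z77 T' + c)%N].

(* Main.v *)
Require Import Defs.
From mathcomp Require Import all_boot all_order all_algebra.
From mathcomp Require Import zify ring lra.
Set Implicit Arguments. Unset Strict Implicit. Unset Printing Implicit Defensive.

Section LZ.
Variable A : eqType.
Implicit Types (w pre f rest s t x y : seq A).

Lemma infix_size s t : infix s t -> size s <= size t.
Proof. by case/infixP => p [q ->]; rewrite !size_cat addnCA leq_addr. Qed.

Lemma lz_next_len_eq w pre f rest :
  w = pre ++ f ++ rest -> f != [::] -> infix (take (size f).-1 f) pre ->
  (rest == [::]) || ~~ infix f pre -> lz_next_len w (size pre) = size f.
Proof.
move=> -> f0 Hinit Hlast; rewrite /lz_next_len.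
rewrite drop_size_cat // take_size_cat //.
set P := (fun l => _).
have L0 : 0 < size f by rewrite lt0n size_eq0.
set s := iota 0 _.
have H1 : (size f).-1 <= find P s.
  rewrite leqNgt; apply/negP => Hlt.
  have Hlt' : find P s < size s.
    rewrite size_iota size_cat; apply: leq_trans (leq_addr _ _).
    by apply: leq_trans Hlt _; rewrite leq_pred.
  have := nth_find 0 (a := P) (s := s).
  rewrite has_find Hlt' => /(_ isT).
  rewrite nth_iota; last by rewrite size_iota in Hlt'.
  rewrite add0n /P -/P -/s => /negP; apply.
  rewrite take_cat ifT; last by apply: leq_ltn_trans Hlt _; rewrite prednK.
  rewrite -(take_takel _ (j := (size f).-1)) //.
  exact: infix_trans (infix_take _ _) Hinit.
case/orP: Hlast => [/eqP Er | Hni].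
  rewrite Er cats0; apply/minn_idPr; by rewrite -(prednK L0) ltnS.
have H2 : find P s <= (size f).-1.
  rewrite leqNgt; apply/negP => Hlt.
  have := before_find 0 Hlt; rewrite nth_iota; last first.
    by rewrite size_cat -(prednK L0) ltnS leq_addr.
  by rewrite add0n /P prednK // take_size_cat // Hni.
have -> : find P s = (size f).-1 by apply/eqP; rewrite eqn_leq H1 H2.
by rewrite prednK //; apply/minn_idPl; rewrite size_cat leq_addr.
Qed.

Fixpoint goodf (pre : seq A) (fs : seq (seq A)) (rest : seq A) : Prop :=
  if fs is f :: fs' then
    [/\ f != [::], infix (take (size f).-1 f) pre,
        (flatten fs' ++ rest == [::]) || ~~ infix f pre & goodf (pre ++ f) fs' rest]
  else True.

Lemma goodf_cat pre fs1 fs2 rest :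
  goodf pre fs1 (flatten fs2 ++ rest) -> goodf (pre ++ flatten fs1) fs2 rest ->
  goodf pre (fs1 ++ fs2) rest.
Proof.
elim: fs1 pre => [|f fs1 IH] pre /=; first by rewrite cats0.
case=> H1 H2 H3 H4 H5; split => //; first by rewrite flatten_cat -catA.
by apply: IH => //; rewrite -catA.
Qed.

Lemma lz_step fuel w p : p < size w ->
  lz_factors fuel.+1 w p = take (lz_next_len w p) (drop p w) :: lz_factors fuel w (p + lz_next_len w p).
Proof. by move=> H /=; rewrite H. Qed.

Lemma goodf_exact fs pre fuel :
  goodf pre fs [::] -> size (flatten fs) <= fuel ->
  size (lz_factors fuel (pre ++ flatten fs) (size pre)) = size fs.
Proof.
elim: fs pre fuel => [|f fs IH] pre fuel /=.
  by rewrite cats0; case: fuel => //= n _ _; rewrite ltnn.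
case=> f0 Hi Hl Hg; have L0 : 0 < size f by rewrite lt0n size_eq0.
case: fuel => [|fuel]; first by rewrite size_cat leqn0 addn_eq0 size_eq0 (negbTE f0).
rewrite size_cat => Hs.
rewrite lz_step; last by rewrite size_cat -addn1 leq_add2l size_cat (leq_trans L0) // leq_addr.
rewrite (@lz_next_len_eq _ pre f (flatten fs)) //; last by rewrite cats0 in Hl.
rewrite /= -size_cat catA IH //.
by rewrite -ltnS (leq_trans _ Hs) // -add1n leq_add2r.
Qed.

Lemma goodf_lower fs pre rest fuel :
  goodf pre fs rest -> rest != [::] -> size (flatten fs ++ rest) <= fuel ->
  size fs < size (lz_factors fuel (pre ++ flatten fs ++ rest) (size pre)).
Proof.
elim: fs pre fuel => [|f fs IH] pre fuel /=.
  move=> _ r0; case: fuel => [|fuel]; first by rewrite leqn0 size_eq0 (negbTE r0).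
  move=> _; rewrite lz_step //; rewrite size_cat -{1}(addn0 (size pre)) ltn_add2l lt0n size_eq0 //.
case=> f0 Hi Hl Hg r0; have L0 : 0 < size f by rewrite lt0n size_eq0.
case: fuel => [|fuel]; first by rewrite leqn0 !size_cat !addn_eq0 size_eq0 (negbTE f0).
rewrite size_cat => Hs.
rewrite lz_step; last by rewrite !size_cat -addn1 leq_add2l -addnA (leq_trans L0) // leq_addr.
rewrite (@lz_next_len_eq _ pre f (flatten fs ++ rest)) ?catA //.
rewrite /= -size_cat -catA ltnS IH //.
by rewrite -ltnS (leq_trans _ Hs) // size_cat !size_cat -addnA -add1n leq_add2r.
Qed.

Lemma z77_exact fs : goodf [::] fs [::] -> z77 (flatten fs) = size fs.
Proof. by move=> H; rewrite /z77 /lz77 -(goodf_exact H (leqnn _)). Qed.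

Lemma z77_lower fs rest : goodf [::] fs rest -> rest != [::] -> size fs < z77 (flatten fs ++ rest).
Proof. by move=> H r0; rewrite /z77 /lz77; apply: (goodf_lower H r0 (leqnn _)). Qed.


Lemma ed_cons (u v : A) s t :
  ed (u :: s) (v :: t) = minn (minn (ed s (v :: t)).+1 (ed (u :: s) t).+1) (ed s t + (u != v)).
Proof. by []. Qed.

Lemma ed_refl s : ed s s = 0.
Proof.
elim: s => [|u s IH] //; rewrite ed_cons eqxx IH addn0.
by apply/eqP; rewrite -leqn0 geq_minr.
Qed.

Lemma ed_eq0 s t : ed s t = 0 -> s = t.
Proof.
elim: s t => [|u s IH] [|v t] //.
rewrite ed_cons => /eqP; rewrite -leqn0 !geq_min !ltn0 /= leqn0 addn_eq0.
by case/andP => /eqP /IH -> /eqP/eqP; rewrite eqb0 negbK => /eqP ->.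
Qed.

Lemma ed_le_sub (u v : A) s t : ed (u :: s) (v :: t) <= ed s t + (u != v).
Proof. by rewrite ed_cons geq_minr. Qed.
Lemma ed_le_del (u v : A) s t : ed (u :: s) (v :: t) <= (ed s (v :: t)).+1.
Proof. by rewrite ed_cons !geq_min leqnn. Qed.
Lemma ed_le_ins (u v : A) s t : ed (u :: s) (v :: t) <= (ed (u :: s) t).+1.
Proof. by rewrite ed_cons !geq_min leqnn orbT. Qed.

Lemma ed_one s t : ed s t <= 1 -> s != t -> ed s t = 1.
Proof.
move=> H1 H2; apply/eqP; rewrite eqn_leq H1 lt0n; apply/eqP => /ed_eq0 E.
by rewrite E eqxx in H2.
Qed.


Lemma infix_catP s x y : infix s (x ++ y) ->
  [\/ infix s x, infix s y |
      exists s1 s2, [/\ s = s1 ++ s2, s1 != [::], s2 != [::], suffix s1 x & prefix s2 y]].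
Proof.
elim: x => [|z x IH]; first by move=> H; apply: Or32.
rewrite cat_cons infix_consl; case/orP.
  rewrite prefixE => /eqP E.
  have {}E : s = take (size s) ((z :: x) ++ y) by [].
  move: E; rewrite take_cat; case: ltnP => Hs E.
    by apply: Or31; rewrite E infix_take.
  set s2 := take _ y in E.
  case: (eqVneq s2 [::]) => Hs2.
    by apply: Or31; rewrite E Hs2 cats0 infix_refl.
  apply: Or33; exists (z :: x), s2; split => //; first exact: suffix_refl.
  exact: prefix_take.
move/IH => [H|H|[s1 [s2 [E H1 H2 H3 H4]]]].
- by apply: Or31; apply: infix_trans H (infix_cons _ _).
- by apply: Or32.
- apply: Or33; exists s1, s2; split => //.
  by rewrite -cat1s; apply: suffix_catr.
Qed.

Lemma suffix_suffix_le s t u : suffix s u -> suffix t u -> size s <= size t -> suffix s t.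
Proof.
rewrite /suffix => H1 H2 Hs.
move: H1 H2; rewrite !prefixE !size_rev => /eqP H1 /eqP H2.
by rewrite -H2 take_takel ?H1.
Qed.

Lemma prefix_prefix_le s t u : prefix s u -> prefix t u -> size s <= size t -> prefix s t.
Proof.
rewrite !prefixE => /eqP H1 /eqP H2 Hs.
by rewrite -H2 take_takel ?H1.
Qed.


Section Runs.
Variable c : A.

Lemma nseqSr r : nseq r c ++ [:: c] = nseq r.+1 c.
Proof. by rewrite -addn1 nseqD. Qed.

Lemma run_mono r m w : m <= r -> infix (nseq r c) w -> infix (nseq m c) w.
Proof. by move=> H; rewrite -(subnKC H) nseqD; apply: catr_infix. Qed.

Lemma run_cat_cons r x d y : d != c -> infix (nseq r c) (x ++ d :: y) ->
  infix (nseq r c) x \/ infix (nseq r c) (d :: y).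
Proof.
move=> dc /infix_catP [H|H|[s1 [[|e s2] [E _ H2 _ H4]]]]; [by left|by right|by []|].
move: H4; rewrite prefix_cons => /andP [/eqP ed _].
have : e \in nseq r c by rewrite E mem_cat inE eqxx orbT.
by rewrite mem_nseq ed (negbTE dc) andbF.
Qed.

Lemma run_rcons r x : infix (nseq r.+1 c) (x ++ [:: c]) ->
  infix (nseq r.+1 c) x \/ suffix (nseq r c) x.
Proof.
move/infix_catP => [H|H|[s1 [s2 [E H1 H2 H3 H4]]]]; first by left.
  by move/infix_size: H => /=; case: r => // _; right; apply: suffix0s.
move: H4; rewrite prefixs1 (negbTE H2) /= => /eqP Es2.
right; move: E; rewrite Es2 -nseqSr !cats1; by move/rcons_inj => [->].
Qed.

Lemma ca_cat r x d y : d != c -> infix (nseq r c ++ [:: d]) (x ++ d :: y) ->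
  [\/ infix (nseq r c ++ [:: d]) x, infix (nseq r c ++ [:: d]) (d :: y) | suffix (nseq r c) x].
Proof.
move=> dc /infix_catP [H|H|[s1 [s2 [E H1 H2 H3 H4]]]]; [by apply: Or31|by apply: Or32|].
apply: Or33.
have Es1 : s1 = take (size s1) (nseq r c ++ [:: d]) by rewrite E take_size_cat.
have Es2 : s2 = drop (size s1) (nseq r c ++ [:: d]) by rewrite E drop_size_cat.
have Hsz : size s1 + size s2 = r.+1 by rewrite -size_cat -E size_cat size_nseq addn1.
have Hr : size s1 = r.
  apply/eqP; rewrite eqn_leq; apply/andP; split.
    by rewrite -ltnS -Hsz -{1}(addn0 (size s1)) ltn_add2l lt0n size_eq0.
  rewrite leqNgt; apply/negP => Hlt.
  move: H4 Es2; clear E; case: s2 H2 Hsz => [//|e s2] _ _.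
  rewrite drop_cat size_nseq Hlt drop_nseq.
  case Er: (r - size s1) => [|k]; first by move/eqP: Er; rewrite subn_eq0 leqNgt Hlt.
  rewrite prefix_cons => /andP [/eqP ->] _ /= [Ec _].
  by rewrite Ec eqxx in dc.
suff -> : nseq r c = s1 by []. 
by rewrite Es1 Hr take_size_cat ?size_nseq.
Qed.

End Runs.

Lemma pat_last s d e x : d != e -> ~~ infix (s ++ [:: d]) x -> ~~ infix (s ++ [:: d]) (x ++ [:: e]).
Proof.
move=> de Hx; apply/negP => /infix_catP [H|H|[s1 [s2 [E H1 H2 H3 H4]]]].
- by rewrite H in Hx.
- move: H; rewrite infixs1 !cats1 -size_eq0 size_rcons /= => /eqP.
  by rewrite -[[:: e]]/(rcons [::] e) => /rcons_inj [_ de']; rewrite de' eqxx in de.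
- move: H4; rewrite prefixs1 (negbTE H2) /= => /eqP Es2.
  move: E; rewrite Es2 !cats1 => /rcons_inj [_ de'].
  by rewrite de' eqxx in de.
Qed.


Section Family.
Variables a b c : A.
Hypotheses (Hab : a != b) (Hac : a != c) (Hbc : b != c).

Fixpoint Tf k := if k is k'.+1 then Tf k' ++ Tf k' ++ [:: c] else [:: a].
Fixpoint Rf i := if i is i'.+1 then Rf i' ++ Tf i ++ [:: c] else [::].

Lemma T_cons k : Tf k = a :: behead (Tf k).
Proof. elim: k => [|k IH] //; rewrite [Tf _.+1]/=; move: IH; case: (Tf k) => [|x l] //= [->] //. Qed.

Lemma T_S k : Tf k.+1 = Tf k ++ a :: (behead (Tf k) ++ [:: c]).
Proof. by rewrite /= {2}(T_cons k). Qed.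

Lemma T_Sc k : Tf k ++ [:: c] = a :: (behead (Tf k) ++ [:: c]).
Proof. by rewrite {1}(T_cons k). Qed.

Lemma T_R i : Tf i.+1 = [:: a; a; c] ++ Rf i.
Proof. elim: i => [|i IH] //. have -> : Tf i.+2 = Tf i.+1 ++ Tf i.+1 ++ [:: c] by []. have -> : Rf i.+1 = Rf i ++ Tf i.+1 ++ [:: c] by []. by rewrite {1}IH -catA. Qed.

Lemma T_suffix k : suffix (nseq k c) (Tf k).
Proof.
elim: k => [|k IH]; first exact: suffix0s.
case/suffixP: IH => u Eu; apply/suffixP; exists (Tf k ++ u).
by rewrite -nseqSr -[Tf k.+1]/(Tf k ++ Tf k ++ [:: c]) {2}Eu -!catA.
Qed.

Lemma T_size k : k < size (Tf k).
Proof.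
elim: k => [|k IH] //. rewrite -[Tf k.+1]/(Tf k ++ Tf k ++ [:: c]) !size_cat /=.
by rewrite addn1 addnS ltnS (leq_trans IH) // leq_addr.
Qed.

Lemma T_run k : ~~ infix (nseq k.+1 c) (Tf k).
Proof.
elim: k => [|k IH].
  by rewrite -[nseq 1 c]/[:: c] -[Tf 0]/[:: a] infix1s inE eq_sym.
apply/negP; rewrite T_S => /run_cat_cons.
case/(_ Hac) => H.
  by move/negP: IH; apply; apply: run_mono H.
move: H; rewrite -T_Sc => /run_rcons [H|H].
  by move/negP: IH; apply; apply: run_mono H.
by move/negP: IH; apply; apply: suffixW.
Qed.

Lemma T_ca k : ~~ infix (nseq k.+1 c ++ [:: a]) (Tf k.+1).
Proof.
have Hr := T_run k.
have Hp : ~~ infix (nseq k.+1 c ++ [:: a]) (Tf k).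
  by apply/negP => /catr_infix H; rewrite H in Hr.
apply/negP; rewrite T_S => /ca_cat; case/(_ Hac) => [H|H|H].
- by rewrite H in Hp.
- by move: H; rewrite -T_Sc; apply/negP; apply: pat_last.
- by move/suffixW: H; apply/negP.
Qed.

Lemma T_ca_c k : ~~ infix (nseq k.+1 c ++ [:: a]) (Tf k.+1 ++ [:: c]).
Proof. by apply: pat_last => //; apply: T_ca. Qed.


Definition Tfs k := [:: a] :: [seq Tf j ++ [:: c] | j <- iota 0 k].

Lemma Tfs_flat k : flatten (Tfs k) = Tf k.
Proof.
elim: k => [|k IH] //.
have -> : Tfs k.+1 = Tfs k ++ [:: Tf k ++ [:: c]] by rewrite /Tfs -addn1 iotaD map_cat.
by rewrite flatten_cat IH /= cats0.
Qed.

Lemma Tfs_size k : size (Tfs k) = k.+1.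
Proof. by rewrite /= size_map size_iota. Qed.

Lemma Tfs_good k rest : goodf [::] (Tfs k) rest.
Proof.
elim: k rest => [|k IH] rest.
  by split => //; rewrite orbT.
have -> : Tfs k.+1 = Tfs k ++ [:: Tf k ++ [:: c]].
  by rewrite /Tfs -addn1 iotaD map_cat.
apply: goodf_cat => //; rewrite cat0s Tfs_flat.
split => //.
- by rewrite -size_eq0 size_cat addn1.
- by rewrite size_cat addn1 /= take_size_cat // infix_refl.
- apply/orP; right; apply/negP => /infix_size.
  by rewrite size_cat addn1 ltnn.
Qed.


Section W.
Variable W : seq A.
Hypotheses (HWa : a \in W) (HWc : c \in W) (HWcc : ~~ infix [:: c; c] W)
  (HWca : ~~ infix [:: c; a] W) (HWaa : ~~ infix [:: a; a] W) (HWs : ~~ suffix [:: a; a; c] W).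

Lemma R_S i : Rf i.+1 = Rf i ++ a :: (behead (Tf i.+1) ++ [:: c]).
Proof. by rewrite -[Rf i.+1]/(Rf i ++ Tf i.+1 ++ [:: c]) T_Sc. Qed.

Lemma X_A i : ~~ infix (nseq i.+2 c) (W ++ Rf i).
Proof.
elim: i => [|i IH]; first by rewrite cats0.
apply/negP; rewrite R_S catA => /run_cat_cons; case/(_ Hac) => H.
  by move/negP: IH; apply; apply: run_mono H.
move: H; rewrite -T_Sc => /run_rcons [H|H].
  by move/negP: (T_run i.+1); apply; apply: run_mono H.
by move/negP: (T_run i.+1); apply; apply: suffixW.
Qed.

Lemma X_B i : ~~ infix (nseq i.+1 c ++ [:: a]) (W ++ Rf i).
Proof.
case: i => [|i]; first by rewrite cats0.
apply/negP; rewrite R_S catA => /ca_cat; case/(_ Hac) => [H|H|H].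
- by move/negP: (X_A i); apply; apply: catr_infix H.
- by move: H; rewrite -T_Sc -[nseq i.+2 c ++ _]/([:: c] ++ (nseq i.+1 c ++ [:: a])) => /catl_infix; apply/negP; apply: T_ca_c.
- by move/negP: (X_A i); apply; apply: suffixW.
Qed.

Definition Gf i := Tf i ++ [:: a].
Definition Hf i := behead (Tf i) ++ [:: c; c].

Lemma G_new i : ~~ infix (Gf i) (W ++ Rf i).
Proof.
case: i => [|i]; first by rewrite cats0.
rewrite /Gf; set P := nseq i.+1 c ++ [:: a].
have hP : suffix P (Tf i.+1 ++ [:: a]).
  by case/suffixP: (T_suffix i.+1) => u ->; apply/suffixP; exists u; rewrite /P -catA.
have -> : W ++ Rf i.+1 = (W ++ Rf i) ++ (Tf i.+1 ++ [:: c]) by rewrite -catA.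
apply/negP => /infix_catP [H|H|[s1 [s2 [E H1 H2 H3 H4]]]].
- by move/negP: (X_B i); apply; apply: suffix_infix_trans hP H.
- by move/negP: (T_ca_c i); apply; apply: suffix_infix_trans hP H.
have Hsz : size s1 + size s2 = (size (Tf i.+1)).+1 by rewrite -size_cat -E size_cat addn1.
have Hs2 : size s2 <= size (Tf i.+1).
  by rewrite -ltnS -Hsz -{1}(add0n (size s2)) ltn_add2r lt0n size_eq0.
have Hpre : prefix s2 (Tf i.+1) by apply: prefix_prefix_le H4 (prefix_prefix _ _) Hs2.
have Hsuf : suffix s2 (Tf i.+1 ++ [:: a]) by rewrite E suffix_suffix.
case: (leqP i.+2 (size s2)) => Hle.
  have : suffix P s2 by apply: suffix_suffix_le hP Hsuf _; rewrite /P size_cat size_nseq addn1.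
  move/suffixW => HP; move/negP: (T_ca i); apply.
  exact: infix_trans HP (prefixW Hpre).
have HsP : suffix s2 P by apply: suffix_suffix_le Hsuf hP _; rewrite /P size_cat size_nseq addn1 ltnW.
move: Hpre; rewrite (T_cons i.+1).
case: s2 H2 Hsz Hs2 Hsuf Hle HsP E H4 => [//|e [|e' s2]] _ Hsz Hs2 Hsuf Hle HsP E H4.
  rewrite prefix_cons => /andP [/eqP He _]; subst e.
  move: E; rewrite !cats1 => /rcons_inj [Es1].
  move: H3; rewrite -Es1 -[Tf i ++ Tf i ++ _]/(Tf i.+1) T_R suffix_catl // => /andP [_ H].
  by move/negP: HWs.
rewrite prefix_cons => /andP [/eqP He _]; subst e.
move: HsP; rewrite suffixE /P size_cat size_nseq addn1 drop_cat size_nseq.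
have Hk : i.+2 - size [:: a, e' & s2] < i.+1 by rewrite /= !subSS ltnS leq_subr.
rewrite Hk drop_nseq.
case Ek: (i.+1 - _) => [|m].
  by move/eqP: Ek; rewrite subn_eq0 leqNgt Hk.
by move=> /= /eqP [Ec _]; move/negP: Hac; rewrite Ec.
Qed.


Lemma H_new i : ~~ infix (Hf i) ((W ++ Rf i) ++ Gf i).
Proof.
have Hin : infix (nseq i.+2 c) (Hf i).
  case/suffixP: (T_suffix i) => u Eu.
  have := T_size i; rewrite /Hf Eu size_cat size_nseq.
  case: u Eu => [|x u] Eu; first by rewrite add0n ltnn.
  move=> _ /=; rewrite -catA (_ : nseq i c ++ [:: c; c] = nseq i.+2 c) ?suffix_infix //.
  by rewrite -addn2 nseqD.
apply/negP => /(infix_trans Hin).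
rewrite /Gf {1}(T_cons i) cat_cons => /run_cat_cons; case/(_ Hac) => H.
  by move/negP: (X_A i).
move: H; rewrite -cat_cons -(T_cons i) => /run_cat_cons; case/(_ Hac) => H.
  by move/negP: (T_run i); apply; apply: run_mono H.
by move/infix_size: H.
Qed.

Lemma GH_good i rest : goodf (W ++ Rf i) [:: Gf i; Hf i] rest.
Proof.
split.
- by rewrite /Gf -size_eq0 size_cat addn1.
- rewrite /Gf size_cat addn1 /= take_size_cat //.
  case: i => [|i]; first by rewrite infix1s mem_cat HWa.
  by rewrite -[Rf i.+1]/(Rf i ++ Tf i.+1 ++ [:: c]) catA infix_infix.
- by rewrite G_new orbT.
split => //.
- by rewrite /Hf -size_eq0 size_cat /= addn2.
- rewrite (_ : Hf i = (behead (Tf i) ++ [:: c]) ++ [:: c]); last by rewrite /Hf -catA.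
  rewrite size_cat addn1 /= take_size_cat //.
  case: i => [|i]; first by rewrite /= infix1s !mem_cat HWc.
  apply: infix_catr; apply: infix_catl; rewrite R_S; apply: infix_catl.
  exact: infix_cons.
- by rewrite H_new orbT.
Qed.

Lemma GH_flat i : flatten [:: Gf i; Hf i] = Tf i.+1 ++ [:: c].
Proof.
rewrite /= cats0 /Gf /Hf -!catA; congr (_ ++ _).
by rewrite {2}(T_cons i).
Qed.

Definition GHfs i := flatten [seq [:: Gf j; Hf j] | j <- iota 0 i].

Lemma GHfs_S i : GHfs i.+1 = GHfs i ++ [:: Gf i; Hf i].
Proof. by rewrite /GHfs -addn1 iotaD map_cat flatten_cat /= ?cats0. Qed.

Lemma GHfs_flat i : flatten (GHfs i) = Rf i.
Proof. by elim: i => [|i IH] //; rewrite GHfs_S flatten_cat IH GH_flat. Qed.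

Lemma GHfs_size i : size (GHfs i) = i.*2.
Proof. by elim: i => [|i IH] //; rewrite GHfs_S size_cat IH /= doubleS addn2. Qed.

Lemma GHfs_good i rest : goodf W (GHfs i) rest.
Proof.
elim: i rest => [|i IH] rest //; rewrite GHfs_S; apply: goodf_cat => //.
by rewrite GHfs_flat; apply: GH_good.
Qed.

Lemma Wfs_good Wfs i rest : flatten Wfs = W -> (forall r, goodf [::] Wfs r) ->
  goodf [::] (Wfs ++ GHfs i) rest.
Proof. by move=> EW HW; apply: goodf_cat => //=; rewrite EW; apply: GHfs_good. Qed.


Variables (Wfs : seq (seq A)) (HWf : flatten Wfs = W) (HWg : forall r, goodf [::] Wfs r).
Hypothesis HWed : forall X, ed ([:: a; a; c] ++ X) (W ++ X) = 1.
Hypothesis HWsz : 2 <= size Wfs <= 4.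

Lemma zW_exact K : z77 (W ++ Rf K) = size Wfs + K.*2.
Proof.
rewrite -HWf -(GHfs_flat K) -flatten_cat z77_exact ?size_cat ?GHfs_size //.
exact: Wfs_good.
Qed.

Lemma zW_pad K pad : pad != [::] -> size Wfs + K.*2 < z77 (W ++ Rf K ++ pad).
Proof.
move=> p0; rewrite -HWf -(GHfs_flat K) catA -flatten_cat.
have := z77_lower (Wfs_good K pad HWf HWg) p0.
by rewrite size_cat GHfs_size.
Qed.

Lemma Tsize k : (size (Tf k)).+1 = 2 ^ k.+1.
Proof.
elim: k => [|k IH] //.
rewrite -[Tf k.+1]/(Tf k ++ Tf k ++ [:: c]) !size_cat /= expnS -IH; lia.
Qed.

Lemma zT_exact k : z77 (Tf k) = k.+1.
Proof. by rewrite -(Tfs_flat k) z77_exact ?Tfs_size //; apply: Tfs_good. Qed.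

Lemma zTpad k m : 0 < m -> m <= (size (Tf k)).+1 ->
  z77 (Tf k ++ take m (Tf k ++ [:: c])) = k.+2.
Proof.
move=> m0 mle; set pad := take m _.
have Hsp : size pad = m by rewrite size_takel // size_cat addn1.
have -> : Tf k ++ pad = flatten (Tfs k ++ [:: pad]) by rewrite flatten_cat Tfs_flat /= cats0.
rewrite z77_exact; first by rewrite size_cat Tfs_size addn1.
apply: goodf_cat; first exact: Tfs_good.
rewrite cat0s Tfs_flat; split => //.
- by rewrite -size_eq0 Hsp -lt0n.
- rewrite Hsp /pad take_takel ?leq_pred // takel_cat; first exact: infix_take.
  by rewrite -ltnS prednK.
Qed.

Lemma MS_pair K0 n : 2 ^ K0.+2 <= n -> exists T T' : seq A,
  [/\ size T = n, size T' = n - 3 + size W, ed T T' = 1, K0.+3 <= z77 T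
    & (z77 T).*2 <= z77 T' + 3].
Proof.
move=> Hn; set t := trunc_log 2 n.
have n0 : 0 < n by apply: leq_trans Hn; rewrite expn_gt0.
have /andP [Ht1 Ht2] := trunc_log_bounds (isT : 1 < 2) n0.
have Kt : K0.+2 <= t := trunc_log_max (isT : 1 < 2) Hn.
set K := t - 2.
have EK : t = K.+2 by rewrite /K; lia.
have Hs := Tsize K.+1.
rewrite -/t EK in Ht1 Ht2 Hs.
rewrite expnS in Ht2.
set m := n - size (Tf K.+1).
have m0 : 0 < m by rewrite /m; lia.
have mle : m <= (size (Tf K.+1)).+1 by rewrite /m; lia.
set pad := take m (Tf K.+1 ++ [:: c]).
have Hsp : size pad = m by rewrite size_takel // size_cat addn1.
have HTR := T_R K.
have HRs : size (Tf K.+1) = (size (Rf K)).+3 by rewrite HTR size_cat.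
exists (Tf K.+1 ++ pad), (W ++ Rf K ++ pad); split.
- rewrite size_cat Hsp /m; lia.
- rewrite !size_cat Hsp /m; lia.
- by rewrite HTR -catA HWed.
- rewrite zTpad //; lia.
- have p0 : pad != [::] by rewrite -size_eq0 Hsp -lt0n.
  have := zW_pad K p0; rewrite zTpad //; lia.
Qed.

Lemma AS_pair M : exists T T' : seq A,
  [/\ M <= z77 T, 3 <= size T, size T' = size T - 3 + size W, ed T T' = 1
    & z77 T + z77 T <= z77 T' + (4 - size Wfs)].
Proof.
exists (Tf M.+1), (W ++ Rf M); split.
- by rewrite zT_exact; lia.
- by rewrite T_R size_cat.
- rewrite T_R !size_cat /=; lia.
- by rewrite T_R HWed.
- rewrite zT_exact zW_exact; lia.
Qed.

End W.

End Family.

End LZ.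

Import Order.TTheory GRing.Theory Num.Theory.

Lemma bigmax_ge_seq (I : eqType) (s : seq I) (P : pred I) (F : I -> rat) i0 :
  i0 \in s -> P i0 -> (F i0 <= \big[Order.max/0%R]_(i <- s | P i) F i)%O.
Proof.
elim: s => //= x s IH; rewrite inE big_cons => /orP [/eqP <-|H] Pi0.
  by rewrite Pi0 le_max lexx.
case: (P x); last exact: IH.
by rewrite le_max IH ?orbT.
Qed.

Lemma MS_ge (S : finType) n m (T T' : seq S) :
  size T = n -> size T' = m -> ed T T' = 1%N ->
  (Defs.ratio (z77 T') (z77 T) <= \big[Order.max/0%R]_(X : n.-tuple S)
     \big[Order.max/0%R]_(Y : m.-tuple S | ed X Y == 1%N) Defs.ratio (z77 Y) (z77 X))%O.
Proof.
move=> /eqP hT /eqP hT' He.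
pose X := Tuple hT; pose Y := Tuple hT'.
have H1 := @bigmax_ge_seq _ (index_enum (n.-tuple S)) xpredT
  (fun X : n.-tuple S => \big[Order.max/0%R]_(Y : m.-tuple S | ed X Y == 1%N) Defs.ratio (z77 Y) (z77 X))
  X (mem_index_enum X) isT.
have H2 := @bigmax_ge_seq _ (index_enum (m.-tuple S)) (fun Y : m.-tuple S => ed X Y == 1%N) (fun Y : m.-tuple S => Defs.ratio (z77 Y) (z77 X))
  Y (mem_index_enum Y) (introT eqP He).
exact: le_trans H2 H1.
Qed.

Lemma ratio_ge (z z' : nat) (eps : rat) : (0 < eps)%R -> (3%:R / eps < z%:R)%R ->
  (z.*2 <= z' + 3)%N -> (2%R - eps <= Defs.ratio z' z)%R.
Proof.
move=> e0 Hz Hzz.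
have z0 : (0 < z%:R :> rat)%R.
  by apply: lt_trans Hz; rewrite divr_gt0 // ltr0n.
rewrite /Defs.ratio ler_pdivlMr //.
move: Hz; rewrite ltr_pdivrMr // => Hz.
have : ((z.*2)%:R <= (z' + 3)%:R :> rat)%R by rewrite ler_nat.
rewrite -muln2 natrM natrD => H.
nra.
Qed.

Lemma pack (S : finType) (a b c : S) (Hab : a != b) (Hac : a != c) (Hbc : b != c)
  (W : seq S) (HWa : a \in W) (HWc : c \in W) (HWcc : ~~ infix [:: c; c] W)
  (HWca : ~~ infix [:: c; a] W) (HWaa : ~~ infix [:: a; a] W) (HWs : ~~ suffix [:: a; a; c] W)
  (Wfs : seq (seq S)) (HWf : flatten Wfs = W) (HWg : forall r, goodf [::] Wfs r)
  (HWed : forall X, ed ([:: a; a; c] ++ X) (W ++ X) = 1%N) (HWsz : (2 <= size Wfs <= 4)%N)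
  (MS : nat -> rat) (len : nat -> nat -> bool) (cst : nat)
  (HMS : forall n (T T' : seq S), (3 <= n)%N -> size T = n -> size T' = (n - 3 + size W)%N ->
          ed T T' = 1%N -> (Defs.ratio (z77 T') (z77 T) <= MS n)%R)
  (Hlen : forall n, (3 <= n)%N -> len n (n - 3 + size W)%N)
  (Hc : (4 - size Wfs)%N = cst) :
  liminf_ge MS 2%R /\ AS_ge S len cst.
Proof.
split.
- move=> eps e0.
  have h0 : (0 <= 3%:R / eps :> rat)%R by rewrite divr_ge0 // ltW.
  have hb := archi_boundP h0.
  set K0 := Num.Def.archi_bound _ in hb.
  exists (2 ^ K0.+2)%N => n Hn.
  have [T [T' [HT HT' He Hz Hz']]] :=
    MS_pair Hab Hac Hbc HWa HWc HWcc HWca HWaa HWs HWf HWg HWed HWsz Hn.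
  have n3 : (3 <= n)%N.
    apply: leq_trans Hn; rewrite !expnS; lia.
  apply: le_trans (HMS n T T' n3 HT HT' He).
  apply: ratio_ge => //.
  apply: lt_le_trans hb _; rewrite ler_nat.
  by apply: leq_trans Hz; rewrite leqW // leqW.
- move=> M.
  have [T [T' [H1 H2 H3 H4 H5]]] :=
    AS_pair Hab Hac Hbc HWa HWc HWcc HWca HWaa HWs HWf HWg HWed HWsz M.
  exists T, T'; split => //; first by rewrite H3; apply: Hlen.
  by rewrite -Hc.
Qed.

Unset Implicit Arguments.
Set Strict Implicit.

Theorem mainTheorem8 (S : finType) (hS : (3 <= #|S|)%N) :
  (liminf_ge (@MS_sub S) 2%R /\ AS_ge S (fun n n' => n' == n) 1) /\
  (liminf_ge (@MS_ins S) 2%R /\ AS_ge S (fun n n' => n' == n.+1) 1) /\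
  (liminf_ge (@MS_del S) 2%R /\ AS_ge S (fun n n' => n'.+1 == n) 2).
Proof.
have [a [b [c [Hab Hac Hbc]]]] : exists a b c : S, [/\ a != b, a != c & b != c].
  move: hS; rewrite cardT; have := enum_uniq S.
  case: (enum S) => [|x [|y [|z r]]] //= /andP [Hx /andP [Hy _]] _.
  exists x, y, z; move: Hx Hy; rewrite !inE !negb_or.
  by case/andP => -> /andP [-> _] /andP [-> _].
have Hba : b != a by rewrite eq_sym.
have Hca : c != a by rewrite eq_sym.
have Hcb : c != b by rewrite eq_sym.
have nab := negbTE Hab. have nba := negbTE Hba. have nac := negbTE Hac.
have nca := negbTE Hca. have nbc := negbTE Hbc. have ncb := negbTE Hcb.
split; [|split].
- apply: (@pack S a b c Hab Hac Hbc [:: a; b; c] _ _ _ _ _ _ [:: [:: a]; [:: b]; [:: c]]).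
  all: try by rewrite /= ?/suffix /= ?inE ?eqxx ?nab ?nba ?nac ?nca ?nbc ?ncb ?orbT.
  all: try by move=> r; do !split; rewrite /= ?inE ?eqxx ?nab ?nba ?nac ?nca ?nbc ?ncb ?orbT.
  + move=> X; apply: ed_one; last by rewrite !eqseq_cons eqxx nab.
    apply: leq_trans (ed_le_sub _ _ _ _) _; rewrite eqxx addn0.
    by apply: leq_trans (ed_le_sub _ _ _ _) _; rewrite ed_refl Hab.
  + move=> n T T' n3 HT HT' He; rewrite /MS_sub; apply: MS_ge => //; rewrite HT' /=; lia.
  + move=> n n3; apply/eqP => /=; lia.
- apply: (@pack S a b c Hab Hac Hbc [:: a; b; a; c] _ _ _ _ _ _ [:: [:: a]; [:: b]; [:: a; c]]).
  all: try by rewrite /= ?/suffix /= ?inE ?eqxx ?nab ?nba ?nac ?nca ?nbc ?ncb ?orbT.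
  all: try by move=> r; do !split; rewrite /= ?inE ?eqxx ?nab ?nba ?nac ?nca ?nbc ?ncb ?orbT.
  + move=> X; apply: ed_one; last by rewrite !eqseq_cons eqxx nab.
    apply: leq_trans (ed_le_sub _ _ _ _) _; rewrite eqxx addn0.
    by apply: leq_trans (ed_le_ins _ _ _ _) _; rewrite ed_refl.
  + move=> n T T' n3 HT HT' He; rewrite /MS_ins; apply: MS_ge => //; rewrite HT' /=; lia.
  + move=> n n3; apply/eqP => /=; lia.
- apply: (@pack S a b c Hab Hac Hbc [:: a; c] _ _ _ _ _ _ [:: [:: a]; [:: c]]).
  all: try by rewrite /= ?/suffix /= ?inE ?eqxx ?nab ?nba ?nac ?nca ?nbc ?ncb ?orbT.
  all: try by move=> r; do !split; rewrite /= ?inE ?eqxx ?nab ?nba ?nac ?nca ?nbc ?ncb ?orbT.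
  + move=> X; apply: ed_one; last by rewrite !eqseq_cons eqxx nac.
    apply: leq_trans (ed_le_sub _ _ _ _) _; rewrite eqxx addn0.
    by apply: leq_trans (ed_le_del _ _ _ _) _; rewrite ed_refl.
  + move=> n T T' n3 HT HT' He; rewrite /MS_del; apply: MS_ge => //; rewrite HT' /=; lia.
  + move=> n n3; apply/eqP => /=; lia.
Qed.
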